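(* For every positive integer $n$, $$\sum_{j=1}^{n}\csc^6\left(\frac{(2j-1)\pi}{4n+2}\right) = \frac{8(n+1)n(8n^4+16n^3+19n^2+11n+6)}{15}.$$ *)

(* Defs.v *)
From Stdlib Require Import Reals.
Open Scope R_scope.

Definition csc (x : R) : R := / sin x.

(* Main.v *)
Set Warnings "-all".
Require Import Defs.
From Stdlib Require Import Reals Lra.
From mathcomp Require Import all_boot all_algebra.
From mathcomp Require Import Rstruct.
From mathcomp Require Import ring lra zify.
Import GRing.Theory Num.Theory.
Local Open Scope ring_scope.

Fixpoint Pp (n : nat) : {poly R} * {poly R} :=
  match n with
  | 0 => (1, 1 - 4%:R *: 'X)
  | S k => ((Pp k).2, (2%:R%:P - 4%:R *: 'X) * (Pp k).2 - (Pp k).1)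
  end.
Definition P n := (Pp n).1.

Lemma P0 : P 0 = 1. Proof. by []. Qed.
Lemma P1 : P 1 = 1 - 4%:R *: 'X. Proof. by []. Qed.
Lemma P2 n : P n.+2 = (2%:R%:P - 4%:R *: 'X) * P n.+1 - P n.
Proof. by []. Qed.

Lemma hP1 x : (P 1).[x] = 1 - 4 * x.
Proof. by rewrite P1 hornerD hornerN hornerZ hornerX -polyC1 hornerC. Qed.

Lemma hP0 x : (P 0).[x] = 1.
Proof. by rewrite P0 -polyC1 hornerC. Qed.

Lemma hP2 n x : (P n.+2).[x] = (2 - 4 * x) * (P n.+1).[x] - (P n).[x].
Proof. rewrite P2 !hornerE. ring. Qed.

Lemma cP2 n k : (P n.+2)`_k.+1 = 2 * (P n.+1)`_k.+1 - 4 * (P n.+1)`_k - (P n)`_k.+1.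
Proof. rewrite P2 mulrBl coefB coefB coefCM -scalerAl coefZ coefXM /=. ring. Qed.
Lemma cP20 n : (P n.+2)`_0 = 2 * (P n.+1)`_0 - (P n)`_0.
Proof. rewrite P2 mulrBl coefB coefB coefCM -scalerAl coefZ coefXM /=. ring. Qed.


Definition a1 (n : nat) := let x : R := n%:R in - (2 * x) - 2 * x ^+ 2.
Definition a2 (n : nat) := let x : R := n%:R in
  (- 4 * x - 2 * x ^+ 2 + 4 * x ^+ 3 + 2 * x ^+ 4) / 3.
Definition a3 (n : nat) := let x : R := n%:R in
  (- 48 * x - 16 * x ^+ 2 + 60 * x ^+ 3 + 20 * x ^+ 4
   - 12 * x ^+ 5 - 4 * x ^+ 6) / 45.

Definition Qc n := [/\ (P n)`_0 = 1, (P n)`_1 = a1 n, (P n)`_2 = a2 n & (P n)`_3 = a3 n].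

Lemma coefsP n : Qc n /\ Qc n.+1.
Proof.
elim: n => [|n [[h0 h1 h2 h3] [k0 k1 k2 k3]]].
  by split; split; rewrite ?P0 ?P1 ?coefB ?coefZ ?coef1 ?coefX /a1 /a2 /a3 /=; first [reflexivity | ring | (field; done)].
split; first by split.
split.
- by rewrite cP20 k0 h0; ring.
- by rewrite cP2 k1 k0 h1 /a1 /=; ring.
- by rewrite cP2 k2 k1 h2 /a1 /a2 /=; field.
- by rewrite cP2 k3 k2 h3 /a2 /a3 /=; field.
Qed.

Lemma coefL (y : R) (Q : {poly R}) k :
  ((1 - y *: 'X) * Q)`_k.+1 = Q`_k.+1 - y * Q`_k.
Proof. by rewrite mulrBl mul1r coefB -scalerAl coefZ coefXM. Qed.
Lemma coefL0 (y : R) (Q : {poly R}) : ((1 - y *: 'X) * Q)`_0 = Q`_0.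
Proof. by rewrite mulrBl mul1r coefB -scalerAl coefZ coefXM /= mulr0 subr0. Qed.

Lemma newton (s : seq R) :
  (\prod_(y <- s) (1 - y *: 'X))`_0 = 1 /\
  \sum_(y <- s) y ^+ 3 =
    - (\prod_(y <- s) (1 - y *: 'X))`_1 ^+ 3
    + 3 * (\prod_(y <- s) (1 - y *: 'X))`_1 * (\prod_(y <- s) (1 - y *: 'X))`_2
    - 3 * (\prod_(y <- s) (1 - y *: 'X))`_3.
Proof.
elim: s => [|y s [h0 h]].
  by rewrite !big_nil !coef1 /=; split => //; ring.
rewrite !big_cons coefL0 !coefL h0 h; split => //; ring.
Qed.

Lemma prod_rev (rs : seq R) : 0 \notin rs ->
  \prod_(r <- rs) ('X - r%:P) =
  (\prod_(r <- rs) (- r))%:P * \prod_(r <- rs) (1 - r^-1 *: 'X).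
Proof.
elim: rs => [|r rs IH]; first by rewrite !big_nil mul1r.
rewrite inE negb_or => /andP[r0 hrs]; rewrite !big_cons IH // polyCM.
have e : 'X - r%:P = (- r)%:P * (1 - r^-1 *: 'X).
  rewrite mulrBr mulr1 mul_polyC scalerA mulNr mulfV 1?eq_sym // scaleN1r.
  by rewrite polyCN opprK addrC.
rewrite e; ring.
Qed.

Lemma factor_gen (p : {poly R}) (rs : seq R) :
  (size p <= (size rs).+1)%N -> p.[0] = 1 -> all (root p) rs -> uniq rs ->
  p = \prod_(r <- rs) (1 - r^-1 *: 'X).
Proof.
move=> hs h0 hall hu.
have [q hq] := uniq_roots_prod_XsubC hall (etrans (uniq_rootsE rs) hu).
have n0 : 0 \notin rs.
  by apply/negP => /(allP hall); rewrite /root h0 oner_eq0.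
have pn0 : p != 0 by apply/eqP => p0; move: h0; rewrite p0 horner0 => /eqP; rewrite eq_sym oner_eq0.
have qn0 : q != 0 by apply/eqP => q0; move: pn0; rewrite hq q0 mul0r eqxx.
have prn0 : \prod_(z <- rs) ('X - z%:P) != 0.
  by rewrite -size_poly_eq0 size_prod_XsubC.
have sq : (size q <= 1)%N.
  move: hs; rewrite hq size_mul // size_prod_XsubC.
  by rewrite addnS /= -addn1 [X in (X <= _)%N]addnC leq_add2l.
move: hq; rewrite (size1_polyC sq) prod_rev // mulrA -polyCM => hp.
have hQ0 : (\prod_(r <- rs) (1 - r^-1 *: 'X)).[0] = 1.
  rewrite horner_prod big1 // => r _; rewrite !hornerE; ring.
have : (q`_0 * \prod_(r <- rs) (- r)) = 1.
  by move: h0; rewrite hp hornerM hornerC hQ0 mulr1.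
by move=> e; rewrite hp e mul1r.
Qed.

Lemma RplusE' (x y : R) : Rplus x y = x + y. Proof. by []. Qed.
Lemma RminusE' (x y : R) : Rminus x y = x - y. Proof. by []. Qed.
Lemma RmultE' (x y : R) : Rmult x y = x * y. Proof. by []. Qed.
Lemma RoppE' (x : R) : Ropp x = - x. Proof. by []. Qed.
Lemma RinvE' (x : R) : Rinv x = x^-1. Proof. by []. Qed.
Lemma RdivE' (x y : R) : Rdiv x y = x / y. Proof. by []. Qed.
Lemma RpowE' (x : R) n : pow x n = x ^+ n. Proof. by rewrite RpowE. Qed.
Lemma R0E' : IZR 0 = @GRing.zero R. Proof. by []. Qed.
Lemma R0E'' : R0 = @GRing.zero R. Proof. by []. Qed.
Lemma R1E'' : R1 = @GRing.one R. Proof. by []. Qed.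
Lemma R1E' : IZR 1 = @GRing.one R. Proof. by []. Qed.
Lemma IZRE' p : IZR (Z.pos p) = (nat_of_pos p)%:R. Proof. by rewrite IZRposE INRE. Qed.
Lemma INRE' n : INR n = n%:R. Proof. by rewrite INRE. Qed.
Ltac toMC := rewrite ?RplusE' ?RminusE' ?RmultE' ?RoppE' ?RinvE' ?RdivE' ?RpowE' ?R0E' ?R1E' ?R0E'' ?R1E'' ?IZRE' ?INRE';
  repeat match goal with |- context [nat_of_pos ?p] => let k := eval compute in (nat_of_pos p) in change (nat_of_pos p) with k end.

Definition th (n i : nat) := let x : R := i.+1%:R in let y : R := n%:R in
  (2 * x - 1) * PI / (4 * y + 2).

Lemma PIpos : 0 < PI. Proof. by apply/RltP; exact: PI_RGT_0. Qed.

Lemma th_pos n i : 0 < th n i.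
Proof.
rewrite /th /=. have hP := PIpos. have hi := ler0n R i. have hn := ler0n R n.
apply: divr_gt0; last by lra.
apply: mulr_gt0 => //. rewrite -natr1. lra.
Qed.

Lemma th_lt n i : (i < n)%N -> th n i < PI / 2.
Proof.
move=> hin. rewrite /th /=. have hP := PIpos.
have hn : i.+1%:R <= n%:R :> R by rewrite ler_nat.
have hi := ler0n R i.
rewrite ltr_pdivrMr; last by lra.
rewrite mulrAC ltr_pdivlMr; last by lra.
nra.
Qed.

Lemma th_mono n i j : (i < j)%N -> th n i < th n j.
Proof.
move=> hij. rewrite /th /=. have hP := PIpos.
have hn : i.+1%:R < j.+1%:R :> R by rewrite ltr_nat.
have hi := ler0n R n.
have h1 : 0 < PI * (4 * n%:R + 2) by apply: mulr_gt0 => //; lra.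
rewrite ltr_pdivrMr; last by lra.
rewrite mulrAC ltr_pdivlMr; last by lra.
nra.
Qed.

Local Open Scope R_scope.

Lemma cos3 t : cos (3 * t) = cos t * (1 - 4 * sin t ^ 2).
Proof.
replace (3 * t) with (2 * t + t) by (toMC; ring).
rewrite cos_plus cos_2a_sin sin_2a. toMC; ring.
Qed.

Lemma cosrec a b : cos (a + b) = 2 * cos b * cos a - cos (a - b).
Proof. rewrite cos_plus cos_minus. toMC; ring. Qed.

Lemma Peval n t : (P n).[sin t ^+ 2] * cos t = cos ((2 * INR n + 1) * t)
  /\ (P n.+1).[sin t ^+ 2] * cos t = cos ((2 * INR n.+1 + 1) * t).
Proof.
elim: n => [|n [IH0 IH1]].
  split.
    rewrite hP0. replace ((2 * INR 0 + 1) * t) with t by (toMC; ring).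
    toMC; ring.
  rewrite P1. replace ((2 * INR 1 + 1) * t) with (3 * t) by (toMC; ring).
  rewrite cos3 hP1. toMC. ring.
split; first exact: IH1.
rewrite hP2.
replace ((2 * INR n.+2 + 1) * t) with ((2 * INR n.+1 + 1) * t + 2 * t)
  by (rewrite !S_INR; toMC; ring).
rewrite cosrec.
replace ((2 * INR n.+1 + 1) * t - 2 * t) with ((2 * INR n + 1) * t)
  by (rewrite !S_INR; toMC; ring).
rewrite -IH0 -IH1 cos_2a_sin. toMC. ring.
Qed.

Lemma cos_top n i : cos ((2 * INR n + 1) * th n i) = 0.
Proof.
apply cos_eq_0_1; exists (Z.of_nat i); rewrite -INR_IZR_INZ.
have hn : (0 < 4 * n%:R + 2 :> R)%R by have := ler0n R n; lra.
toMC; rewrite /th /=; field.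
by rewrite lt0r_neq0.
Qed.

Local Open Scope ring_scope.

Lemma cos_th n i : (i < n)%N -> cos (th n i) != 0.
Proof.
move=> hi; apply/lt0r_neq0/RltP; apply: cos_gt_0; apply/RltP; toMC;
  have := th_pos n i; have := th_lt _ _ hi; have := PIpos; lra.
Qed.

Lemma root_th n i : (i < n)%N -> root (P n) (sin (th n i) ^+ 2).
Proof.
move=> hi; rewrite /root; apply/eqP.
have [h _] := Peval n (th n i). move: h; rewrite cos_top RmultE' => /eqP.
by rewrite mulf_eq0 (negbTE (cos_th _ _ hi)) orbF => /eqP.
Qed.

Lemma sin_th_pos n i : (i < n)%N -> 0 < sin (th n i).
Proof.
move=> hi; apply/RltP; apply: sin_gt_0; apply/RltP; toMC;
  have := th_pos n i; have := th_lt _ _ hi; have := PIpos; lra.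
Qed.

Lemma sin_th_mono n i j : (i < j)%N -> (j < n)%N -> sin (th n i) < sin (th n j).
Proof.
move=> hij hj. have hi : (i < n)%N by apply: ltn_trans hj.
apply/RltP; apply: sin_increasing_1; (apply/RleP || apply/RltP); toMC;
  have := th_pos n i; have := th_lt _ _ hi; have := th_pos n j; have := th_lt _ _ hj;
  have := th_mono n _ _ hij; have := PIpos; lra.
Qed.

Definition L2 : {poly R} := 2%:R%:P - 4%:R *: 'X.
Definition L1 : {poly R} := 1 - 4%:R *: 'X.

Lemma sizeP n : (size (P n) <= n.+1)%N /\ (size (P n.+1) <= n.+2)%N.
Proof.
have h2 : (size L2 <= 2)%N.
  rewrite /L2.
  apply: leq_trans (size_add _ _) _; rewrite geq_max size_opp.
  rewrite (leq_trans (size_polyC_leq1 _)) //.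
  by apply: leq_trans (size_scale_leq _ _) _; rewrite size_polyX.
have h1 : (size L1 <= 2)%N.
  rewrite /L1.
  apply: leq_trans (size_add _ _) _; rewrite geq_max size_opp size_poly1 /=.
  by apply: leq_trans (size_scale_leq _ _) _; rewrite size_polyX.
elim: n => [|n [IH0 IH1]].
  by rewrite P0 size_poly1 P1.
split => //; rewrite P2 -/L2.
apply: leq_trans (size_add _ _) _; rewrite geq_max size_opp.
apply/andP; split; last by apply: leq_trans IH0 _; lia.
apply: leq_trans (size_mul_leq _ _) _. rewrite -subn1. lia.
Qed.

Lemma sq_lt (a b : R) : 0 < a -> a < b -> a ^+ 2 = b ^+ 2 -> False.
Proof. move=> h1 h2 h3; nra. Qed.

Lemma main' n :
  \sum_(0 <= i < n) (sin (th n i) ^+ 2)^-1 ^+ 3 =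
  - a1 n ^+ 3 + 3 * a1 n * a2 n - 3 * a3 n.
Proof.
set rs := [seq sin (th n i) ^+ 2 | i <- iota 0 n].
have hsz : (size (P n) <= (size rs).+1)%N by rewrite size_map size_iota; case: (sizeP n).
have [[c0 c1 c2 c3] _] := coefsP n.
have h0 : (P n).[0] = 1 by rewrite horner_coef0 c0.
have hall : all (root (P n)) rs.
  by apply/allP => x /mapP [i]; rewrite mem_iota add0n => /andP [_ hi] ->; exact: root_th.
have hu : uniq rs.
  rewrite map_inj_in_uniq ?iota_uniq // => i j; rewrite !mem_iota !add0n => /andP [_ hi] /andP [_ hj] e.
  case: (ltngtP i j) => // hij.
  - have h1 := sin_th_mono _ _ _ hij hj; have h2 := sin_th_pos _ _ hi; by case: (sq_lt _ _ h2 h1 e).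
  - have h1 := sin_th_mono _ _ _ hij hi; have h2 := sin_th_pos _ _ hj; by case: (sq_lt _ _ h2 h1 (esym e)).
have hf := factor_gen _ _ hsz h0 hall hu.
have [_ hn] := newton [seq r^-1 | r <- rs].
have hQ : \prod_(y <- [seq r^-1 | r <- rs]) (1 - y *: 'X) = P n by rewrite big_map -hf.
rewrite hQ c1 c2 c3 in hn.
rewrite -hn big_map big_map /index_iota subn0.
by [].
Qed.

Local Open Scope R_scope.

Lemma csc6 n i : (csc ((2 * INR (S i) - 1) * PI / (4 * INR n + 2))) ^ 6
  = GRing.exp (GRing.inv (GRing.exp (sin (th n i)) 2)) 3.
Proof.
rewrite /csc /th; cbv zeta. toMC.
by rewrite -exprVn -exprM.
Qed.

Theorem mainTheorem20 (n : nat) (hn : (1 <= n)%coq_nat) :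
  sum_f_R0 (fun i => (csc ((2 * INR (S i) - 1) * PI / (4 * INR n + 2))) ^ 6) (n - 1)
  = 8 * (INR n + 1) * INR n
      * (8 * INR n ^ 4 + 16 * INR n ^ 3 + 19 * INR n ^ 2 + 11 * INR n + 6) / 15.
Proof.
rewrite sum_f_R0E.
have -> : (n - 1).+1 = n by move/leP: hn; lia.
under eq_bigr do rewrite csc6.
rewrite main' /a1 /a2 /a3 /=.
toMC. by field.
Qed.
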